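(* The graph $K_{15}-6K_2$ has a triangular embedding in an orientable surface; in particular its orientable genus equals $10$.
   Context: $K_{15}-6K_2$ is the complete graph on 15 vertices with the 6 edges of a matching removed. An embedding is triangular if it is cellular and every face is bounded by a closed walk of length 3. *)

(* Defs.v *)
(* Combinatorial (rotation-system) description of
   orientable cellular graph embeddings (Heffter-Edmonds). *)
From HB Require Import structures.
From mathcomp Require Import all_boot fingroup perm.
Set Implicit Arguments. Unset Strict Implicit. Unset Printing Implicit Defensive.

Section Embeddings.
Variables (T : finType) (adj : rel T).

Definition dart := {x : T * T | adj x.1 x.2}.

Definition tail (d : dart) : T := (val d).1.
Definition head (d : dart) : T := (val d).2.

(* reversal of a dart (the graph is assumed symmetric; the default is never used) *)
Definition drev (d : dart) : dart :=
  odflt d (insub ((val d).2, (val d).1) : option dart).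

Definition is_rotation (rho : {perm dart}) : Prop :=
  (forall d, tail (rho d) = tail d) /\
  (forall d d', tail d = tail d' -> fconnect rho d d').

Definition face_perm (rho : {perm dart}) (d : dart) : dart := rho (drev d).

Definition nfaces (rho : {perm dart}) : nat := fcard (face_perm rho) predT.

Definition nedges : nat := #|{: dart}| %/ 2.

(* Euler: 2 - 2 g = V - E + F  (graph connected, embedding cellular) *)
Definition emb_genus (rho : {perm dart}) : nat :=
  (2 + nedges - (#|T| + nfaces rho)) %/ 2.

Definition triangular (rho : {perm dart}) : Prop :=
  forall d, fingraph.order (face_perm rho) d = 3.

Definition orientable_genus_is (g : nat) : Prop :=
  (exists rho, is_rotation rho /\ emb_genus rho = g) /\
  (forall rho, is_rotation rho -> g <= emb_genus rho).

End Embeddings.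

(* K_15 - 6K_2 on vertex set 'I_15: remove the matching {0,1},{2,3},...,{10,11} *)
Definition matched (u v : 'I_15) : bool :=
  [&& (u < 12)%N, (v < 12)%N & u./2 == v./2].

Definition K15m6K2 : rel 'I_15 := fun u v => (u != v) && ~~ matched u v.

(* Main.v *)
Require Import Defs.
From mathcomp Require Import all_boot fingroup perm.
From mathcomp Require Import zify.
Set Implicit Arguments. Unset Strict Implicit. Unset Printing Implicit Defensive.

Definition tbl : seq (seq nat) := [::
  [:: 0; 0; 5; 14; 6; 9; 11; 10; 12; 3; 8; 7; 2; 4; 13];
  [:: 0; 0; 6; 4; 14; 2; 13; 3; 10; 7; 9; 12; 5; 8; 11];
  [:: 12; 5; 0; 0; 10; 0; 1; 9; 6; 11; 14; 4; 13; 7; 8];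
  [:: 9; 7; 0; 0; 1; 14; 10; 8; 5; 12; 4; 13; 11; 6; 0];
  [:: 13; 3; 11; 10; 0; 0; 0; 12; 7; 14; 2; 8; 6; 9; 1];
  [:: 2; 12; 1; 8; 0; 0; 9; 11; 13; 0; 6; 14; 7; 10; 3];
  [:: 4; 2; 8; 13; 12; 10; 0; 0; 11; 5; 3; 0; 14; 1; 9];
  [:: 11; 9; 13; 1; 8; 12; 0; 0; 3; 2; 0; 5; 4; 14; 10];
  [:: 10; 13; 14; 7; 11; 3; 2; 4; 0; 0; 1; 6; 0; 5; 12];
  [:: 5; 10; 7; 0; 13; 6; 14; 1; 0; 0; 12; 2; 3; 11; 4];
  [:: 7; 8; 4; 6; 3; 13; 5; 14; 0; 1; 0; 0; 9; 12; 2];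
  [:: 6; 14; 9; 12; 2; 7; 8; 0; 4; 13; 0; 0; 1; 3; 5];
  [:: 8; 11; 0; 9; 7; 1; 4; 5; 14; 10; 13; 3; 0; 2; 6];
  [:: 14; 6; 12; 11; 0; 8; 3; 2; 1; 4; 5; 9; 10; 0; 7];
  [:: 3; 4; 10; 5; 9; 11; 12; 13; 2; 6; 7; 1; 8; 0; 0]].

Notation D := (dart K15m6K2).
Definition An (u v : nat) : bool := (u != v) && ~~ [&& u < 12, v < 12 & u./2 == v./2].
Lemma AnE (u v : 'I_15) : K15m6K2 u v = An u v. Proof. by []. Qed.
Definition Nn (u v : nat) : nat := nth 0 (nth [::] tbl u) v.
Definition I15 := iota 0 15.
Definition gn (p : nat * nat) : nat * nat := (p.2, Nn p.2 p.1).

Lemma C0 : all (fun u => all (fun v => An u v ==> An v u) I15) I15.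
Proof. vm_compute. reflexivity. Qed.
Lemma C1 : all (fun u => all (fun v => An u v ==> ((Nn u v < 15) && An u (Nn u v))) I15) I15.
Proof. vm_compute. reflexivity. Qed.
Lemma C2 : all (fun u => all (fun v1 => all (fun v2 =>
  An u v1 ==> An u v2 ==> (Nn u v1 == Nn u v2) ==> (v1 == v2)) I15) I15) I15.
Proof. vm_compute. reflexivity. Qed.
Lemma C3 : all (fun u => all (fun v => all (fun v' =>
  An u v ==> An u v' ==> has (fun n => iter n (Nn u) v == v') (iota 0 14)) I15) I15) I15.
Proof. vm_compute. reflexivity. Qed.
Lemma C4 : all (fun u => all (fun v => An u v ==>
  [&& gn (gn (gn (u, v))) == (u, v), (u, v) != gn (u, v), (u, v) != gn (gn (u, v))
    & gn (u, v) != gn (gn (u, v))]) I15) I15.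
Proof. vm_compute. reflexivity. Qed.
Lemma C5 : all (fun u => all (fun v => An u v ==> has (fun x => An u x && (x != v)) I15) I15) I15.
Proof. vm_compute. reflexivity. Qed.
Lemma Csum : \sum_(0 <= u < 15) \sum_(0 <= v < 15) (An u v : nat) = 198.
Proof. rewrite unlock; vm_compute. reflexivity. Qed.

Lemma allI (P : nat -> bool) : all P I15 -> forall u, u < 15 -> P u.
Proof. by move/allP => H u hu; apply: H; rewrite mem_iota. Qed.

Lemma ltn15 (u : 'I_15) : u < 15. Proof. exact: ltn_ord. Qed.

Lemma symK (u v : 'I_15) : K15m6K2 u v -> K15m6K2 v u.
Proof. rewrite !AnE => h. by have := allI (allI C0 (ltn15 u)) (ltn15 v); rewrite h. Qed.

Lemma C1' (u v : 'I_15) : K15m6K2 u v -> (Nn u v < 15) && An u (Nn u v).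
Proof. rewrite AnE => h. by have := allI (allI C1 (ltn15 u)) (ltn15 v); rewrite h. Qed.

Definition vn (d : D) : nat * nat := (nat_of_ord (val d).1, nat_of_ord (val d).2).

Lemma vn_inj : injective vn.
Proof.
move=> x y; rewrite /vn => -[h1 h2]; apply: val_inj.
rewrite [val x]surjective_pairing [val y]surjective_pairing.
by congr pair; apply: ord_inj.
Qed.

Definition nxt (u v : 'I_15) : 'I_15 := inord (Nn u v).
Definition rf (d : D) : D := insubd d ((val d).1, nxt (val d).1 (val d).2).
Definition gf (d : D) : D := rf (drev d).

Lemma vn_rf d : vn (rf d) = ((vn d).1, Nn (vn d).1 (vn d).2).
Proof.
have := C1' (valP d) => /andP[h1 h2].
rewrite /vn /rf val_insubd /= /nxt AnE inordK // h2 /= inordK //.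
Qed.

Lemma vn_drev d : vn (drev d) = ((vn d).2, (vn d).1).
Proof.
rewrite /drev; case: insubP => [u Hu Eu|] /=.
  by rewrite /vn Eu.
by rewrite symK // (valP d).
Qed.

Lemma vn_gf d : vn (gf d) = gn (vn d).
Proof. by rewrite /gf vn_rf vn_drev. Qed.

Lemma vn_adj d : An (vn d).1 (vn d).2.
Proof. exact: (valP d). Qed.
Lemma vn_lt d : ((vn d).1 < 15) && ((vn d).2 < 15).
Proof. by rewrite /vn /= !ltn15. Qed.

Lemma rf_inj : injective rf.
Proof.
move=> x y E; have := congr1 vn E; rewrite !vn_rf => -[E1 E2].
apply: vn_inj; rewrite [vn x]surjective_pairing [vn y]surjective_pairing.
have := allI (allI (allI C2 (ltn15 (val y).1)) (ltn15 (val x).2)) (ltn15 (val y).2).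
have := vn_adj x; have := vn_adj y; rewrite /vn /= in E1 E2 *; rewrite -E1 => -> -> /=.
by rewrite E2 E1 eqxx /= => /eqP ->.
Qed.

Definition rho0 : {perm D} := perm rf_inj.

Lemma iter_rf n d : vn (iter n rf d) = ((vn d).1, iter n (Nn (vn d).1) (vn d).2).
Proof. elim: n => [|n IH] /=; first by rewrite /vn.
by rewrite vn_rf IH. Qed.

Lemma rho0_rot : is_rotation rho0.
Proof.
split=> [d|d d' E].
  by rewrite /tail permE; apply: ord_inj; have := vn_rf d; rewrite /vn => -[].
have [n En] : exists n, iter n (Nn (tail d)) (val d).2 = (val d').2.
  have h1 := valP d; have h2 := valP d'; simpl in h1, h2.
  move: E; rewrite /tail => E; rewrite E in h1 *.
  have := allI (allI (allI C3 (ltn15 (val d').1)) (ltn15 (val d).2)) (ltn15 (val d').2).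
  by rewrite -!AnE h1 h2 !implyTb => /hasP[n _ /eqP]; exists n.
have -> : d' = iter n rho0 d.
  rewrite (eq_iter (permE rf_inj)); apply: vn_inj; rewrite iter_rf.
  by rewrite /vn /= -/(tail d) -/(tail d') -E En.
exact: fconnect_iter.
Qed.

Lemma rho0_tri : triangular rho0.
Proof.
move=> d.
have Hf : face_perm rho0 =1 gf by move=> x; rewrite /face_perm /gf permE.
have -> : fingraph.order (face_perm rho0) d = fingraph.order gf d.
  by apply: eq_card => x; exact: eq_fconnect Hf d x.
have C := allI (allI C4 (ltn15 (val d).1)) (ltn15 (val d).2).
move: C; rewrite -/(vn d) (surjective_pairing (vn d)) vn_adj /= => C.
rewrite -(surjective_pairing (vn d)) in C.
case/and4P: C => c1 c2 c3 c4.
apply: (@order_cycle _ gf [:: d; gf d; gf (gf d)]) => //.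
- rewrite /= !eqxx /= andbT; apply/eqP/vn_inj; rewrite !vn_gf; exact/eqP.
- rewrite /= !inE -!(inj_eq vn_inj) !vn_gf. by rewrite negb_or c2 c3 c4.
- by rewrite mem_head.
Qed.

Lemma card_D : #|{: D}| = 198.
Proof.
rewrite card_sig -sum1_card.
have -> : \sum_(p : 'I_15 * 'I_15 | [pred x | K15m6K2 x.1 x.2] p) 1
        = \sum_(u < 15) \sum_(v < 15) (K15m6K2 u v : nat).
  rewrite pair_big /= [LHS]big_mkcond /=.
  by apply: eq_big => // p; case: K15m6K2.
rewrite (eq_bigr (fun u : 'I_15 => \sum_(0 <= v < 15) (An u v : nat))); last first.
  by move=> u _; rewrite big_mkord.
by rewrite -(big_mkord xpredT (fun u => \sum_(0 <= v < 15) (An u v : nat))) Csum.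
Qed.

Lemma count3 (T : finType) (f : T -> T) :
  injective f -> (forall x, 2 < fingraph.order f x) -> fcard f predT * 3 <= #|T|.
Proof.
move=> finj Hord.
have -> : fcard f predT = #|froots f|.
  by apply: eq_card => x; rewrite !inE andbT.
rewrite -sum_nat_const -sum1_card.
rewrite [X in _ <= X](partition_big (froot f) (froots f)); last by move=> x _; exact: (roots_root (fconnect_sym finj)).
rewrite [X in X <= _](eq_bigr (fun _ => 3)) //. apply: leq_sum => r Hr.
rewrite (eq_bigl (fun i => i \in fconnect f r)) ?sum1_card; first exact: Hord.
move=> x; rewrite inE /= -(eqP Hr) root_connect; last exact: fconnect_sym.
have Hr2 : froot f r = r by apply/eqP. rewrite Hr2 -topredE /= fconnect_sym //.
Qed.


Lemma drev_inv (d : D) : drev (drev d) = d.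
Proof. apply: vn_inj; rewrite !vn_drev /=. by rewrite /vn. Qed.

Lemma face_inj (rho : {perm D}) : injective (face_perm rho).
Proof. by move=> a b /perm_inj E; rewrite -(drev_inv a) E drev_inv. Qed.

Lemma order_ge3 (rho : {perm D}) : is_rotation rho ->
  forall x, 2 < fingraph.order (face_perm rho) x.
Proof.
case=> Ht Hc x.
have vt e : (vn (rho e)).1 = (vn e).1 := congr1 (@nat_of_ord 15) (Ht e).
have vf e : (vn (face_perm rho e)).1 = (vn e).2.
  by rewrite /face_perm vt vn_drev.
have Hit := iter_order (@face_inj rho) x.
have := @fingraph.order_gt0 _ (face_perm rho) x.
case Eo: (fingraph.order (face_perm rho) x) Hit => [|[|[|n]]] // Hit _.
- have E : (vn x).1 = (vn x).2 by move: (vf x); rewrite /= in Hit; rewrite Hit.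
  by have := vn_adj x; rewrite E /An eqxx.
- set y := face_perm rho x in Hit.
  have E1 : (vn y).1 = (vn x).2 by rewrite vf.
  have E2 : (vn x).1 = (vn y).2 by move: (vf y); rewrite /= in Hit; rewrite Hit.
  have Ey : y = drev x by apply: vn_inj; rewrite vn_drev -E1 E2 -surjective_pairing.
  have Hfix : rho (drev x) = drev x by exact: Ey.
  set e := drev x in Hfix.
  have := allI (allI C5 (ltn15 (val e).1)) (ltn15 (val e).2).
  rewrite -AnE (valP e) implyTb => /hasP[z]; rewrite mem_iota /= => Hz /andP[Az Nz].
  have Hd' : K15m6K2 (val e).1 (inord z) by rewrite AnE inordK.
  pose d' : D := exist _ ((val e).1, inord z) Hd'.
  have /iter_findex : fconnect rho e d' by apply: Hc.
  have Hi k : iter k rho e = e by elim: k => //= k ->.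
  rewrite Hi => Ed.
  have := congr1 (fun d : D => nat_of_ord (val d).2) Ed; rewrite /= inordK // => Ee.
  by rewrite Ee eqxx in Nz.
Qed.

Theorem mainTheorem5 :
  (exists rho : {perm dart K15m6K2},
      is_rotation rho /\ triangular rho) /\
  orientable_genus_is K15m6K2 10.
Proof.
split; first by exists rho0; split; [exact: rho0_rot | exact: rho0_tri].
split.
  exists rho0; split; first exact: rho0_rot.
  have sub : (predT : {pred D}) \subset order_set (face_perm rho0) 3.
    by apply/subsetP => y _; rewrite inE; apply/eqP; exact: rho0_tri.
  have clos : fclosed (face_perm rho0) (predT : {pred D}) by move=> ? ?.
  have H := fcard_order_set (@face_inj rho0) sub clos.
  have E : #|(predT : {pred D})| = 198 by rewrite -card_D; apply: eq_card.
  move: H; rewrite /emb_genus /nedges /nfaces E card_ord => H.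
  set F := fcard (face_perm rho0) predT in H *. clearbody F. lia.
move=> rho Hrot; have H := count3 (@face_inj rho) (order_ge3 Hrot).
rewrite /emb_genus /nedges /nfaces card_ord.
have E : #|{: D}| = 198 := card_D.
move: H E; set F := fcard (face_perm rho) predT; set c := #|_| => H E.
clearbody F c. lia.
Qed.
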